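(* For all $k\in\mathbb N$, $\mathbf{FO}(=\!(\cdot),\mathrm{All}_k,\sqcup)\subsetneq\mathbf{FO}(=\!(\cdot),\mathrm{All}_{k+1},\sqcup)$; moreover, every sentence of each of these logics is equivalent to some first-order sentence.
   Context: Team semantics (lax version). For a structure $\mathfrak M$ with domain $M$, a team $X$ is a (possibly empty) set of assignments $s:V\to M$, $V$ a finite set of variables; $X(\vec v)=\{s(\vec v):s\in X\}$. Satisfaction for formulas in negation normal form: first-order literal $\alpha$: every $s\in X$ satisfies $\alpha$ (Tarski); $\psi\vee\theta$: $X=Y\cup Z$ with $\mathfrak M\models_Y\psi$, $\mathfrak M\models_Z\theta$; $\psi\wedge\theta$: both; $\exists v\psi$: some $F:X\to\mathcal P(M)\setminus\{\emptyset\}$ with $\mathfrak M\models_{X[F/v]}\psi$, $X[F/v]=\{s[m/v]:s\in X,m\in F(s)\}$; $\forall v\psi$: $\mathfrak M\models_{X[M/v]}\psi$, $X[M/v]=\{s[m/v]:s\in X,m\in M\}$. A sentence $\phi$ is true in $\mathfrak M$ iff $\mathfrak M\models_{\{\emptyset\}}\phi$; it is equivalent to a first-order sentence $\phi'$ if $\mathfrak M\models_{\{\emptyset\}}\phi\iff\mathfrak M\models\phi'$ for all $\mathfrak M$. Constancy atoms $=\!(\vec v)$ (all arities): $\mathfrak M\models_X=\!(\vec v)$ iff $s(\vec v)=s'(\vec v)$ for all $s,s'\in X$. $\mathrm{All}_k$ denotes the $k$-ary totality atoms $\mathrm{All}_k(\vec v)$ for $k$-tuples $\vec v$ of variables: $\mathfrak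 M\models_X\mathrm{All}_k(\vec v)$ iff $X(\vec v)=M^k$. Classical disjunction: $\mathfrak M\models_X\phi\sqcup\psi$ iff $\mathfrak M\models_X\phi$ or $\mathfrak M\models_X\psi$. $\mathbf{FO}(\ldots)$ is first-order logic in negation normal form extended with the listed atoms/operators. $L_1\subseteq L_2$ means every formula of $L_1$ is equivalent (satisfied by the same teams in all structures) to some formula of $L_2$; $\subsetneq$ means $L_1\subseteq L_2$ but not $L_2\subseteq L_1$. *)

(* Defs.v *)
From mathcomp Require Import all_boot.

Set Implicit Arguments.
Unset Strict Implicit.
Unset Printing Implicit Defensive.

(* A first-order vocabulary: relation and function symbols with arities
   (constants are 0-ary function symbols). *)
Record signature := Signature {
  rsym : Type; rar : rsym -> nat;
  fsym : Type; far : fsym -> nat }.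

Section Syntax.
Variable S : signature.

Inductive term : Type :=
| TVar (v : nat)
| TFun (f : fsym S) (args : 'I_(far f) -> term).

(* Formulas in negation normal form. *)
Inductive form : Type :=
| FEq   (t1 t2 : term)
| FNeq  (t1 t2 : term)
| FRel  (r : rsym S) (args : 'I_(rar r) -> term)
| FNRel (r : rsym S) (args : 'I_(rar r) -> term)
| FConst (vs : seq nat)
| FAllA  (vs : seq nat)
| FAnd (phi psi : form)
| FOr  (phi psi : form)
| FCor (phi psi : form)          (* classical disjunction ⊔ *)
| FEx (v : nat) (phi : form)
| FFa (v : nat) (phi : form).

Fixpoint tfree (v : nat) (t : term) : bool :=
  match t with
  | TVar w => w == v
  | TFun f a => [exists i, tfree v (a i)]
  end.

Fixpoint ffree (v : nat) (phi : form) : bool :=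
  match phi with
  | FEq t1 t2 | FNeq t1 t2 => tfree v t1 || tfree v t2
  | FRel r a | FNRel r a => [exists i, tfree v (a i)]
  | FConst vs | FAllA vs => v \in vs
  | FAnd p q | FOr p q | FCor p q => ffree v p || ffree v q
  | FEx w p | FFa w p => (w != v) && ffree v p
  end.

Definition sentence (phi : form) : Prop := forall v, ~~ ffree v phi.

Fixpoint isFO (phi : form) : bool :=
  match phi with
  | FEq _ _ | FNeq _ _ | FRel _ _ | FNRel _ _ => true
  | FConst _ | FAllA _ | FCor _ _ => false
  | FAnd p q | FOr p q => isFO p && isFO q
  | FEx _ p | FFa _ p => isFO p
  end.

Fixpoint inFOconstAllCor (k : nat) (phi : form) : bool :=
  match phi with
  | FEq _ _ | FNeq _ _ | FRel _ _ | FNRel _ _ => true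
  | FConst _ => true
  | FAllA vs => size vs == k
  | FAnd p q | FOr p q | FCor p q => inFOconstAllCor k p && inFOconstAllCor k q
  | FEx _ p | FFa _ p => inFOconstAllCor k p
  end.

End Syntax.

Arguments TVar {S}.

Record structure (S : signature) := mkStructure {
  dom : Type;
  dom0 : dom;
  rint : forall r : rsym S, ('I_(rar r) -> dom) -> Prop;
  fint : forall f : fsym S, ('I_(far f) -> dom) -> dom }.

Section Semantics.
Variable S : signature.
Variable M : structure S.

(* Assignments are partial functions with (for teams) a finite domain V;
   None = undefined. *)
Definition assign := nat -> option (dom M).
Definition team := assign -> Prop.

Definition empty_assign : assign := fun _ => None.

Definition upd (s : assign) (v : nat) (m : dom M) : assign :=
  fun w => if w == v then Some m else s w.

Definition team_on (V : seq nat) (X : team) : Prop :=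
  forall s, X s -> forall v, isSome (s v) = (v \in V).

Fixpoint teval (s : assign) (t : term S) : option (dom M) :=
  match t with
  | TVar v => s v
  | TFun f a =>
      if [forall i, isSome (teval s (a i))]
      then Some (fint (fun i => odflt (dom0 M) (teval s (a i))))
      else None
  end.

Definition lit_eq s t1 t2 : Prop :=
  exists m, teval s t1 = Some m /\ teval s t2 = Some m.
Definition lit_neq s t1 t2 : Prop :=
  exists m1 m2, teval s t1 = Some m1 /\ teval s t2 = Some m2 /\ m1 <> m2.
Definition lit_rel s (r : rsym S) (a : 'I_(rar r) -> term S) : Prop :=
  exists ms, (forall i, teval s (a i) = Some (ms i)) /\ rint ms.
Definition lit_nrel s (r : rsym S) (a : 'I_(rar r) -> term S) : Prop :=
  exists ms, (forall i, teval s (a i) = Some (ms i)) /\ ~ rint ms.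

(* Lax team semantics. *)
Fixpoint tsat (X : team) (phi : form S) : Prop :=
  match phi with
  | FEq t1 t2 => forall s, X s -> lit_eq s t1 t2
  | FNeq t1 t2 => forall s, X s -> lit_neq s t1 t2
  | FRel r a => forall s, X s -> lit_rel s a
  | FNRel r a => forall s, X s -> lit_nrel s a
  | FConst vs => forall s s', X s -> X s' -> map s vs = map s' vs
  | FAllA vs => forall ms : seq (dom M), size ms = size vs ->
                  exists s, X s /\ map s vs = map Some ms
  | FAnd p q => tsat X p /\ tsat X q
  | FOr p q => exists Y Z : team, (forall s, X s <-> Y s \/ Z s) /\
                  tsat Y p /\ tsat Z q
  | FCor p q => tsat X p \/ tsat X q
  | FEx v p => exists F : assign -> dom M -> Prop,
                  (forall s, X s -> exists m, F s m) /\
                  tsat (fun t => exists s m, [/\ X s, F s m & t = upd s v m]) p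
  | FFa v p => tsat (fun t => exists s m, X s /\ t = upd s v m) p
  end.

(* Tarski semantics (used only on first-order formulas). *)
Fixpoint fosat (s : assign) (phi : form S) : Prop :=
  match phi with
  | FEq t1 t2 => lit_eq s t1 t2
  | FNeq t1 t2 => lit_neq s t1 t2
  | FRel r a => lit_rel s a
  | FNRel r a => lit_nrel s a
  | FConst _ | FAllA _ | FCor _ _ => False
  | FAnd p q => fosat s p /\ fosat s q
  | FOr p q => fosat s p \/ fosat s q
  | FEx v p => exists m, fosat (upd s v m) p
  | FFa v p => forall m, fosat (upd s v m) p
  end.

Definition team_true (phi : form S) : Prop :=
  tsat (fun s => s = empty_assign) phi.
Definition fo_true (phi : form S) : Prop := fosat empty_assign phi.

End Semantics.

Definition fequiv (S : signature) (phi psi : form S) : Prop :=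
  forall (M : structure S) (V : seq nat) (X : team M),
    team_on V X -> (forall v, ffree v phi || ffree v psi -> v \in V) ->
    (tsat X phi <-> tsat X psi).

Definition logic := forall S : signature, form S -> bool.

Definition included (L1 L2 : logic) : Prop :=
  forall (S : signature) (phi : form S), L1 S phi ->
    exists psi : form S, L2 S psi /\ fequiv phi psi.

Definition strictly_included (L1 L2 : logic) : Prop :=
  included L1 L2 /\ ~ included L2 L1.

Definition FOconstAllCor (k : nat) : logic := fun S phi => inFOconstAllCor k phi.

Definition sentences_FO (L : logic) : Prop :=
  forall (S : signature) (phi : form S), L S phi -> sentence phi ->
    exists phi' : form S, [/\ isFO phi', sentence phi' &
      forall M : structure S, team_true M phi <-> fo_true M phi'].

(* Main.v *)
Require Import Defs.
From mathcomp Require Import all_boot zify.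
From Stdlib Require Import Lia.
From Stdlib Require Lists.List Classical ClassicalEpsilon FunctionalExtensionality.

Set Implicit Arguments.
Unset Strict Implicit.
Unset Printing Implicit Defensive.


Ltac fext := apply: FunctionalExtensionality.functional_extensionality.

Section Basics.
Variable S : signature.
Variable M : structure S.
Implicit Types (s : assign M) (phi : form S) (t : term S).

Lemma upd_same s v m : upd s v m v = Some m.
Proof. by rewrite /upd eqxx. Qed.

Lemma upd_other s v w m : w != v -> upd s v m w = s w.
Proof. by rewrite /upd => /negbTE ->. Qed.

Lemma upd_comm s x y m n : x != y -> upd (upd s x m) y n = upd (upd s y n) x m.
Proof.
move=> nxy; fext => w; rewrite /upd; have [->|ny] := eqVneq w y.
  by rewrite eq_sym (negbTE nxy).
by [].
Qed.

Lemma teval_agree t s s' : (forall v, tfree v t -> s v = s' v) -> teval s t = teval s' t.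
Proof.
elim: t => [v|f a IH] /= H; first by apply: H; rewrite /= eqxx.
have E : forall i, teval s (a i) = teval s' (a i).
  move=> i; apply: IH => v hv; apply: H; apply/existsP; by exists i.
have -> : [forall i, isSome (teval s (a i))] = [forall i, isSome (teval s' (a i))].
  by apply: eq_forallb => i; rewrite E.
case: ifP => // _; congr (Some (fint _)); fext => i; by rewrite E.
Qed.

Lemma fosat_agree phi s s' : (forall v, ffree v phi -> s v = s' v) ->
  fosat s phi <-> fosat s' phi.
Proof.
elim: phi s s' => [t1 t2|t1 t2|r a|r a|vs|vs|p IHp q IHq|p IHp q IHq|p IHp q IHq|x p IHp|x p IHp] s s' H /=.
- rewrite /lit_eq (@teval_agree t1 s s') ?(@teval_agree t2 s s') //;
  by move=> v hv; apply: H; rewrite /= hv ?orbT.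
- rewrite /lit_neq (@teval_agree t1 s s') ?(@teval_agree t2 s s') //;
  by move=> v hv; apply: H; rewrite /= hv ?orbT.
- have E : forall i, teval s (a i) = teval s' (a i).
    by move=> i; apply: teval_agree => v hv; apply: H; apply/existsP; exists i.
  rewrite /lit_rel; split; case=> ms [h1 h2]; exists ms; split=> // i.
    by rewrite -E.
  by rewrite E.
- have E : forall i, teval s (a i) = teval s' (a i).
    by move=> i; apply: teval_agree => v hv; apply: H; apply/existsP; exists i.
  rewrite /lit_nrel; split; case=> ms [h1 h2]; exists ms; split=> // i.
    by rewrite -E.
  by rewrite E.
- by [].
- by [].
- rewrite (IHp s s') ?(IHq s s') // => v hv; apply: H; by rewrite /= hv ?orbT.
- rewrite (IHp s s') ?(IHq s s') // => v hv; apply: H; by rewrite /= hv ?orbT.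
- by [].
- have E : forall m, fosat (upd s x m) p <-> fosat (upd s' x m) p.
    move=> m; apply: IHp => v hv; rewrite /upd; case: eqP => // /eqP nv.
    by apply: H; rewrite /= eq_sym nv.
  by split; case=> m hm; exists m; apply/E.
- have E : forall m, fosat (upd s x m) p <-> fosat (upd s' x m) p.
    move=> m; apply: IHp => v hv; rewrite /upd; case: eqP => // /eqP nv.
    by apply: H; rewrite /= eq_sym nv.
  by split=> hm m; apply/E.
Qed.

End Basics.


Section Trans.
Variable S : signature.

Definition ftrue : form S := FFa 0 (FEq (TVar 0) (TVar 0)).
Definition ffalse : form S := FEx 0 (FNeq (TVar 0) (TVar 0)).

Fixpoint ceqs (vs cs : seq nat) : form S :=
  match vs, cs with
  | v :: vs', c :: cs' => FAnd (FEq (TVar v) (TVar c)) (ceqs vs' cs')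
  | _, _ => ftrue
  end.

Definition clause := (form S * list (seq nat * form S))%type.

Fixpoint nC (phi : form S) : nat :=
  match phi with
  | FConst vs => size vs
  | FAnd p q | FOr p q | FCor p q => nC p + nC q
  | FEx _ p | FFa _ p => nC p
  | _ => 0
  end.

Definition orC (c1 c2 : clause) : clause :=
  (FOr c1.1 c2.1, List.app (List.map (fun j => (j.1, FAnd c1.1 j.2)) c1.2)
                           (List.map (fun j => (j.1, FAnd c2.1 j.2)) c2.2)).
Definition andC (c1 c2 : clause) : clause := (FAnd c1.1 c2.1, List.app c1.2 c2.2).
Definition exC x (c : clause) : clause :=
  (FEx x c.1, List.map (fun j => (j.1, FEx x (FAnd c.1 j.2))) c.2).
Definition faC x (c : clause) : clause :=
  (FFa x c.1, List.map (fun j => (j.1, FEx x j.2)) c.2).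
Definition pairs (f : clause -> clause -> clause) (l1 l2 : list clause) :=
  List.flat_map (fun c1 => List.map (f c1) l2) l1.

Lemma in_pairs f l1 l2 c : List.In c (pairs f l1 l2) ->
  exists c1 c2, [/\ List.In c1 l1, List.In c2 l2 & c = f c1 c2].
Proof.
rewrite /pairs List.in_flat_map => -[c1 [h1]] /List.in_map_iff [c2 [<- h2]].
by exists c1, c2.
Qed.

Lemma in_pairs2 f l1 l2 c1 c2 : List.In c1 l1 -> List.In c2 l2 ->
  List.In (f c1 c2) (pairs f l1 l2).
Proof.
move=> h1 h2; rewrite /pairs List.in_flat_map; exists c1; split=> //.
by apply: List.in_map.
Qed.

Variable B offA : nat.

Fixpoint tr (off : nat) (phi : form S) : list clause :=
  match phi with
  | FConst vs => [:: (ceqs vs (iota off (size vs)), [::])]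
  | FAllA vs => [:: (ftrue, [:: (iota offA (size vs), ceqs vs (iota offA (size vs)))])]
  | FAnd p q => pairs andC (tr off p) (tr (off + nC p) q)
  | FOr p q => pairs orC (tr off p) (tr (off + nC p) q)
  | FCor p q => List.app (tr off p) (tr (off + nC p) q)
  | FEx x p => List.map (exC x) (tr off p)
  | FFa x p => List.map (faC x) (tr off p)
  | lit => [:: (lit, [::])]
  end.

Fixpoint tvlt (t : term S) : bool :=
  match t with
  | TVar v => v < B
  | TFun f a => [forall i, tvlt (a i)]
  end.

Fixpoint vlt (phi : form S) : bool :=
  match phi with
  | FEq t1 t2 | FNeq t1 t2 => tvlt t1 && tvlt t2
  | FRel r a | FNRel r a => [forall i, tvlt (a i)]
  | FConst vs | FAllA vs => all (fun v => v < B) vs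
  | FAnd p q | FOr p q | FCor p q => vlt p && vlt q
  | FEx x p | FFa x p => (x < B) && vlt p
  end.

Lemma tvlt_free t v : tvlt t -> tfree v t -> v < B.
Proof.
elim: t => [w|f a IH] /=; first by move=> h /eqP <-.
move=> /forallP h /existsP [i hi]; exact: IH (h i) hi.
Qed.

Lemma vlt_free phi v : vlt phi -> ffree v phi -> v < B.
Proof.
elim: phi => [t1 t2|t1 t2|r a|r a|vs|vs|p IHp q IHq|p IHp q IHq|p IHp q IHq|x p IHp|x p IHp] /=;
 try (by move=> /andP [h1 h2] /orP [] h; [exact: tvlt_free h1 h | exact: tvlt_free h2 h]);
 try (by move=> /forallP h /existsP [i hi]; exact: tvlt_free (h i) hi);
 try (by move=> /allP h hv; exact: h);
 try (by move=> /andP [h1 h2] /orP [] h; [exact: IHp | exact: IHq]);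
 by move=> /andP [_ h] /andP [_ hv]; exact: IHp.
Qed.

Lemma ffree_ceqs vs cs v : ffree v (ceqs vs cs) -> (v \in vs) || (v \in cs).
Proof.
have T : ffree v ftrue = false by rewrite /= orbb andNb.
elim: vs cs => [|w vs IH] [|c cs]; rewrite ?T //=.
case/orP; first by case/orP=> /eqP <-; rewrite !inE eqxx ?orbT.
by move/IH; rewrite !inE; case/orP=> ->; rewrite ?orbT.
Qed.

Definition FVc (off : nat) (phi : form S) (c : clause) : Prop :=
  (forall v, ffree v c.1 -> (v < B -> ffree v phi) /\ (B <= v -> off <= v < off + nC phi)) /\
  (forall A th, List.In (A, th) c.2 -> (forall a, a \in A -> offA <= a) /\
     forall v, ffree v th -> (v < B -> ffree v phi) /\
                             (B <= v -> (off <= v < off + nC phi) \/ v \in A)).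

Lemma tr_FV phi off c : B <= offA -> vlt phi -> B <= off -> List.In c (tr off phi) -> FVc off phi c.
Proof.
elim: phi off c => [t1 t2|t1 t2|r a|r a|vs|vs|p IHp q IHq|p IHp q IHq|p IHp q IHq|x p IHp|x p IHp] off c hA hv hB /=;
 try (case=> // <-; split=> // v hf; split=> // hle;
      have := vlt_free hv hf; lia).
-
  case=> // <-; split=> //= v /ffree_ceqs /orP [] h; split=> hh.
  + by [].
  + have := vlt_free hv (v:=v); rewrite /= h => /(_ isT); lia.
  + move: h; rewrite mem_iota; lia.
  + move: h; rewrite mem_iota; lia.
-
  case=> // <-; split=> /=; first by move=> v; rewrite /= orbb andNb.
  move=> A th [] // [<- <-]; split; first by move=> a; rewrite mem_iota => /andP [].
  move=> v /ffree_ceqs /orP [] h; split=> hh.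
  + by [].
  + have := vlt_free hv (v:=v); rewrite /= h => /(_ isT); lia.
  + move: h; rewrite mem_iota; lia.
  + by right.
-
  move: hv => /andP [hp hq] /in_pairs [c1 [c2 [h1 h2 ->]]].
  have [F1 J1] := IHp off c1 hA hp hB h1.
  have [F2 J2] := IHq (off + nC p) c2 hA hq ltac:(lia) h2.
  split=> /=.
  + move=> v /orP [].
    * move/F1 => [a b]; split=> hh; rewrite ?(a hh) ?orbT //; have := b hh; lia.
    * move/F2 => [a b]; split=> hh; rewrite ?(a hh) ?orbT //; have := b hh; lia.
  + move=> A th /List.in_app_iff [].
    * move/J1 => [ha hth]; split=> // v /hth [a b]; split=> hh; rewrite ?(a hh) ?orbT //.
      case: (b hh) => [hr|->]; [left; lia | by right].
    * move/J2 => [ha hth]; split=> // v /hth [a b]; split=> hh; rewrite ?(a hh) ?orbT //.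
      case: (b hh) => [hr|->]; [left; lia | by right].
-
  move: hv => /andP [hp hq] /in_pairs [c1 [c2 [h1 h2 ->]]].
  have [F1 J1] := IHp off c1 hA hp hB h1.
  have [F2 J2] := IHq (off + nC p) c2 hA hq ltac:(lia) h2.
  split=> /=.
  + move=> v /orP [].
    * move/F1 => [a b]; split=> hh; rewrite ?(a hh) ?orbT //; have := b hh; lia.
    * move/F2 => [a b]; split=> hh; rewrite ?(a hh) ?orbT //; have := b hh; lia.
  + move=> A th /List.in_app_iff [] /List.in_map_iff [[A' th'] [[<- <-]]] /=.
    * move/J1 => [ha hth]; split=> // v /= /orP [].
      - move/F1 => [a b]; split=> hh; rewrite ?(a hh) //; left; have := b hh; lia.
      - move/hth => [a b]; split=> hh; rewrite ?(a hh) //.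
        case: (b hh) => [hr|->]; [left; lia | by right].
    * move/J2 => [ha hth]; split=> // v /= /orP [].
      - move/F2 => [a b]; split=> hh; rewrite ?(a hh) ?orbT //; left; have := b hh; lia.
      - move/hth => [a b]; split=> hh; rewrite ?(a hh) ?orbT //.
        case: (b hh) => [hr|->]; [left; lia | by right].
-
  move: hv => /andP [hp hq] /List.in_app_iff [] h.
  + have [F1 J1] := IHp off c hA hp hB h.
    split=> /=.
    * move=> v /F1 [a b]; split=> hh; [by rewrite /= (a hh) ?orbT | have := b hh; lia].
    * move=> A th /J1 [ha hth]; split=> // v /hth [a b]; split=> hh; [by rewrite /= (a hh) ?orbT | case: (b hh) => [hr|->]; [left; lia | by right]].
  + have [F1 J1] := IHq (off + nC p) c hA hq ltac:(lia) h.
    split=> /=.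
    * move=> v /F1 [a b]; split=> hh; [by rewrite /= (a hh) ?orbT | have := b hh; lia].
    * move=> A th /J1 [ha hth]; split=> // v /hth [a b]; split=> hh; [by rewrite /= (a hh) ?orbT | case: (b hh) => [hr|->]; [left; lia | by right]].
-
  move: hv => /andP [hx hp] /List.in_map_iff [c' [<- h]].
  have [F1 J1] := IHp off c' hA hp hB h.
  split=> /=.
  + move=> v /andP [nx /F1 [a b]]; split=> hh; rewrite ?nx ?(a hh) //; exact: b.
  + move=> A th /List.in_map_iff [[A' th'] [[<- <-]]] /= /J1 [ha hth]; split=> //.
    move=> v /andP [nx /orP []].
    * move/F1 => [a b]; split=> hh; rewrite ?nx ?(a hh) //; left; exact: b.
    * move/hth => [a b]; split=> hh; rewrite ?nx ?(a hh) //; exact: b.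
-
  move: hv => /andP [hx hp] /List.in_map_iff [c' [<- h]].
  have [F1 J1] := IHp off c' hA hp hB h.
  split=> /=.
  + move=> v /andP [nx /F1 [a b]]; split=> hh; rewrite ?nx ?(a hh) //; exact: b.
  + move=> A th /List.in_map_iff [[A' th'] [[<- <-]]] /= /J1 [ha hth]; split=> //.
    move=> v /andP [nx /hth [a b]]; split=> hh; rewrite ?nx ?(a hh) //; exact: b.
Qed.

End Trans.
Arguments ceqs {S}. Arguments ftrue {S}. Arguments ffalse {S}.


Section Sem.
Variable S : signature.
Variable M : structure S.
Variables B offA : nat.
Implicit Types (s : assign M) (phi : form S).

Definition mrg s (e : nat -> dom M) : assign M :=
  fun v => if v < B then s v else Some (e v).

Fixpoint updl s (A : seq nat) (ms : seq (dom M)) : assign M :=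
  match A, ms with
  | a :: A', m :: ms' => updl (upd s a m) A' ms'
  | _, _ => s
  end.

Lemma mrg_lt s e v : v < B -> mrg s e v = s v.
Proof. by rewrite /mrg => ->. Qed.

Lemma mrg_ge s e v : B <= v -> mrg s e v = Some (e v).
Proof. by rewrite /mrg leqNgt => /negbTE ->. Qed.

Lemma mrg_upd s e x m : x < B -> mrg (upd s x m) e = upd (mrg s e) x m.
Proof.
move=> hx; fext=> v; rewrite /mrg /upd; have [->|nv] := eqVneq v x; first by rewrite hx.
by [].
Qed.

Lemma fosat_mrg phi s e : vlt B phi -> fosat (mrg s e) phi <-> fosat s phi.
Proof.
move=> hv; apply: fosat_agree => v hf; apply: mrg_lt; exact: vlt_free hf.
Qed.

Lemma updl_out s A ms v : v \notin A -> updl s A ms v = s v.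
Proof.
elim: A s ms => [|a A IH] s [|m ms] //=; rewrite inE negb_or => /andP [na nA].
by rewrite IH // upd_other.
Qed.

Lemma updl_agree s s' A ms v : (v \in A /\ size ms = size A) \/ s v = s' v ->
  updl s A ms v = updl s' A ms v.
Proof.
elim: A s s' ms => [|a A IH] s s' [|m ms] /=; try by case=> [[]|].
move=> H; apply: IH; have [->|na] := eqVneq v a; first by right; rewrite !upd_same.
case: H => [[]|e]; last by right; rewrite !upd_other.
by rewrite inE (negbTE na) /= => hA [hs]; left.
Qed.

Lemma updl_upd s A ms x m : x \notin A -> updl (upd s x m) A ms = upd (updl s A ms) x m.
Proof.
elim: A s ms => [|a A IH] s [|n ms] //=; rewrite inE negb_or => /andP [nxa nA].
by rewrite upd_comm // IH.
Qed.

Lemma updl_map s A ms : uniq A -> size ms = size A -> map (updl s A ms) A = map Some ms.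
Proof.
elim: A s ms => [|a A IH] s [|m ms] //= /andP [na uA] [hs].
by rewrite IH // updl_out // upd_same.
Qed.

Lemma ftrue_sem s : fosat s ftrue.
Proof. by move=> m; exists m; rewrite /= /upd eqxx. Qed.

Lemma ffalse_sem s : ~ fosat s ffalse.
Proof. by case=> m [m1 [m2 [/= -> [[->]]]]]. Qed.

Lemma ceqs_sem s vs cs : size vs = size cs ->
  fosat s (ceqs vs cs) <-> (map s vs = map s cs /\ forall v, v \in vs -> isSome (s v)).
Proof.
elim: vs cs => [|v vs IH] [|c cs] //= => [_|[hs]].
  by split=> // _; exact: ftrue_sem.
rewrite IH //; split.
- case=> [[m [/= h1 h2]] [h3 h4]]; split; first by rewrite h1 h2 h3.
  by move=> w; rewrite inE => /orP [/eqP ->|/h4]; rewrite ?h1.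
- case=> [[h1 h3] h4]; split; last first.
    by split=> // w hw; apply: h4; rewrite inE hw orbT.
  have := h4 v; rewrite inE eqxx => /(_ isT); case E: (s v) => [m|] // _.
  by exists m; rewrite /= -h1.
Qed.

Definition SemC (X : team M) (e : nat -> dom M) (c : clause S) : Prop :=
  (forall s, X s -> fosat (mrg s e) c.1) /\
  (forall A th, List.In (A, th) c.2 -> forall ms, size ms = size A ->
     exists s, X s /\ fosat (updl (mrg s e) A ms) th).

Definition Def (X : team M) phi := forall s, X s -> forall v, ffree v phi -> isSome (s v).

Lemma SemC_env X phi off c e e' : B <= offA -> vlt B phi -> B <= off ->
  List.In c (tr offA off phi) ->
  (forall v, off <= v < off + nC phi -> e v = e' v) -> SemC X e c -> SemC X e' c.
Proof.
move=> hA hv hB hc he [H0 HJ]; have [F J] := tr_FV hA hv hB hc; split.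
- move=> s Xs; apply/(fosat_agree (s := mrg s e)); last exact: H0.
  move=> v /F [_ b]; rewrite /mrg; case: ltnP => // hh; by rewrite he // b.
- move=> A th hj ms hs; have [s [Xs hth]] := HJ A th hj ms hs; exists s; split=> //.
  apply/(fosat_agree (s := updl (mrg s e) A ms)); last exact: hth.
  move=> v hf; apply: updl_agree; case hvA: (v \in A); first by left.
  right; rewrite /mrg; case: ltnP => // hh; have [_ b] := (J A th hj).2 v hf.
  by case: (b hh) => [hr|]; [rewrite he | rewrite hvA].
Qed.

Lemma th0_updl phi off c A th s ms : B <= offA -> vlt B phi -> B <= off ->
  off + nC phi <= offA -> List.In c (tr offA off phi) -> List.In (A, th) c.2 ->
  fosat (updl s A ms) c.1 <-> fosat s c.1.
Proof.
move=> hA hv hB hO hc hj; have [F J] := tr_FV hA hv hB hc.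
have [ha _] := J A th hj.
apply: fosat_agree => v /F [a b]; apply: updl_out; apply/negP => /ha hh.
case: (ltnP v B) => h; [lia | have := b h; lia].
Qed.

Lemma Def_sub (X Y : team M) phi : (forall s, Y s -> X s) -> Def X phi -> Def Y phi.
Proof. by move=> h hD s /h; exact: hD. Qed.

End Sem.


Lemma map_some (T : Type) (f : nat -> option T) vs ms v :
  map f vs = map Some ms -> v \in vs -> isSome (f v).
Proof.
elim: vs ms => [|w vs IH] [|m ms] //= [h1 h2]; rewrite inE => /orP [/eqP ->|]; [by rewrite h1 | exact: IH h2].
Qed.

Section Main.
Variable S : signature.
Variable M : structure S.
Variables B offA : nat.
Implicit Types (s : assign M) (phi : form S).

Notation SemC := (SemC B).
Notation mrg := (mrg B).

Lemma lit_case phi (X : team M) : vlt B phi ->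
  (tsat X phi <-> forall s, X s -> fosat s phi) ->
  tsat X phi <-> exists e c, List.In c [:: (phi, [::])] /\ SemC X e c.
Proof.
move=> hv ->; split=> [H|[e [c [[<-|[]] [H _]]]]].
- exists (fun _ => dom0 M), (phi, [::]); split; first by left.
  split=> [s Xs|A th []]; apply/fosat_mrg => //; exact: H.
- by move=> s Xs; apply/(fosat_mrg _ e hv); exact: H.
Qed.

Lemma tr_sem phi off (X : team M) : B <= offA -> vlt B phi -> B <= off ->
  off + nC phi <= offA -> Def X phi ->
  (tsat X phi <-> exists e c, List.In c (tr offA off phi) /\ SemC X e c).
Proof.
elim: phi off X => [t1 t2|t1 t2|r a|r a|vs|vs|p IHp q IHq|p IHp q IHq|p IHp q IHq|x p IHp|x p IHp] off X hA hv hB hO hD;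
  try (by apply: lit_case).
-
  rewrite /=; have hvs : forall v, v \in vs -> v < B by move/allP: hv.
  have Cge : forall w, w \in iota off (size vs) -> B <= w by move=> w; rewrite mem_iota; lia.
  have key : forall s e, fosat (mrg s e) (ceqs vs (iota off (size vs))) <->
       (map s vs = map (fun w => Some (e w)) (iota off (size vs)) /\
        forall v, v \in vs -> isSome (s v)).
    move=> s e; rewrite ceqs_sem ?size_iota //.
    have -> : map (mrg s e) vs = map s vs by apply/eq_in_map => v /hvs /mrg_lt ->.
    have -> : map (mrg s e) (iota off (size vs)) = map (fun w => Some (e w)) (iota off (size vs)).
      by apply/eq_in_map => w /Cge /mrg_ge ->.
    split => -[h1 h2]; split => // v hv'.
      by rewrite -(mrg_lt s e (hvs v hv')); exact: h2.
    by rewrite (mrg_lt s e (hvs v hv')); exact: h2.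
  split.
  + move=> H; case: (Classical_Prop.classic (exists s0, X s0)) => [[s0 X0]|nX].
    * pose e := fun w => odflt (dom0 M) (s0 (nth 0 vs (w - off))).
      exists e, (ceqs vs (iota off (size vs)), [::]); split; first by left.
      split=> [s Xs|A th []]; apply/key; split; last by move=> v hv'; exact: hD s Xs v hv'.
      rewrite (H s s0 Xs X0).
      have -> : iota off (size vs) = map (addn off) (iota 0 (size vs)) by rewrite -iotaDl addn0.
      rewrite -map_comp.
      have -> : map ((fun w => Some (e w)) \o addn off) (iota 0 (size vs)) =
                map (fun v => Some (odflt (dom0 M) (s0 v))) (map (nth 0 vs) (iota 0 (size vs))).
        by rewrite -map_comp; apply: eq_map => i /=; rewrite /e addKn.
      rewrite map_nth_iota0 // take_size; apply/eq_in_map => v hv'.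
      by have := hD s0 X0 v hv'; case: (s0 v).
    * exists (fun _ => dom0 M), (ceqs vs (iota off (size vs)), [::]); split; first by left.
      by split=> [s Xs|A th []]; case: nX; exists s.
  + case=> e [c [[<-|[]] [H _]]] s s' Xs Xs'.
    have [h1 _] := (key s e).1 (H s Xs); have [h2 _] := (key s' e).1 (H s' Xs').
    by rewrite h1 h2.
-
  rewrite /=; have hvs : forall v, v \in vs -> v < B by move/allP: hv.
  set A := iota offA (size vs).
  have key : forall s e ms, size ms = size vs ->
      (fosat (updl (mrg s e) A ms) (ceqs vs A) <-> map s vs = map Some ms).
    move=> s e ms hs; rewrite ceqs_sem ?size_iota // updl_map ?iota_uniq ?size_iota //.
    have hrw : forall v, v \in vs -> updl (mrg s e) A ms v = s v.
      move=> v hv'; rewrite updl_out ?mrg_lt ?hvs //.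
      by apply/negP; rewrite mem_iota => /andP [h _]; have := hvs v hv'; lia.
    have -> : map (updl (mrg s e) A ms) vs = map s vs by apply/eq_in_map.
    split=> [[]//|h]; split=> // v hv'; rewrite hrw //; exact: map_some h hv'.
  split.
  + move=> H; exists (fun _ => dom0 M), (ftrue, [:: (A, ceqs vs A)]); split; first by left.
    split=> [s _|A' th [[<- <-]|[]] ms hs]; first exact: ftrue_sem.
    rewrite size_iota in hs; have [s [Xs hm]] := H ms hs; exists s; split=> //; exact/key.
  + case=> e [c [[<-|[]] [_ H]]] ms hs.
    have [s [Xs hm]] := H A (ceqs vs A) (or_introl erefl) ms ltac:(by rewrite size_iota).
    by exists s; split=> //; apply/(key s e).
-
  move: hv => /= /andP [hp hq]; rewrite /= in hO.
  have hDp : Def X p by move=> s Xs v hf; apply: (hD s Xs v); rewrite /= hf.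
  have hDq : Def X q by move=> s Xs v hf; apply: (hD s Xs v); rewrite /= hf orbT.
  rewrite /= (IHp off X hA hp hB ltac:(lia) hDp) (IHq (off + nC p) X hA hq ltac:(lia) ltac:(lia) hDq).
  split.
  + case=> [[e1 [c1 [h1 s1]]] [e2 [c2 [h2 s2]]]].
    pose e := fun v => if v < off + nC p then e1 v else e2 v.
    have s1' : SemC X e c1.
      by apply: (SemC_env hA hp hB h1 _ s1) => v hr; rewrite /e; case: ltnP => // h; lia.
    have s2' : SemC X e c2.
      apply: (SemC_env hA hq _ h2 _ s2) => [|v hr]; first lia.
      by rewrite /e; case: ltnP => // h; lia.
    exists e, (andC c1 c2); split; first exact: in_pairs2.
    case: s1' => [a1 b1]; case: s2' => [a2 b2].
    split=> [s Xs|A th /List.in_app_iff [] hj]; first by split; [exact: a1 | exact: a2].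
      exact: b1.
    exact: b2.
  + case=> e [c [/in_pairs [c1 [c2 [h1 h2 ->]]] [a b]]]; split.
    * exists e, c1; split=> //; split=> [s Xs|A th hj]; first by case: (a s Xs).
      by apply: b; apply/List.in_app_iff; left.
    * exists e, c2; split=> //; split=> [s Xs|A th hj]; first by case: (a s Xs).
      by apply: b; apply/List.in_app_iff; right.
-
  move: hv => /= /andP [hp hq]; rewrite /= in hO.
  split.
  + case=> Y [Z [hc [tY tZ]]].
    have hDY : Def Y p.
      by move=> s Ys v hf; apply: (hD s _ v); [apply/hc; left | rewrite /= hf].
    have hDZ : Def Z q.
      by move=> s Zs v hf; apply: (hD s _ v); [apply/hc; right | rewrite /= hf orbT].
    have [e1 [c1 [h1 s1]]] := (IHp off Y hA hp hB ltac:(lia) hDY).1 tY.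
    have [e2 [c2 [h2 s2]]] := (IHq (off + nC p) Z hA hq ltac:(lia) ltac:(lia) hDZ).1 tZ.
    pose e := fun v => if v < off + nC p then e1 v else e2 v.
    have s1' : SemC Y e c1.
      by apply: (SemC_env hA hp hB h1 _ s1) => v hr; rewrite /e; case: ltnP => // h; lia.
    have s2' : SemC Z e c2.
      apply: (SemC_env hA hq _ h2 _ s2) => [|v hr]; first lia.
      by rewrite /e; case: ltnP => // h; lia.
    exists e, (orC c1 c2); split; first exact: in_pairs2.
    case: s1' => [a1 b1]; case: s2' => [a2 b2]; split.
    * by move=> s /hc [Ys|Zs]; [left; exact: a1 | right; exact: a2].
    * move=> A th /List.in_app_iff [] /List.in_map_iff [[A' th'] [[<- <-]] hj] ms hs /=.
      - have [s [Ys hth]] := b1 A' th' hj ms hs; exists s; split; first by apply/hc; left.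
        split=> //; apply/(th0_updl (mrg s e) ms hA hp hB ltac:(lia) h1 hj); exact: a1.
      - have [s [Zs hth]] := b2 A' th' hj ms hs; exists s; split; first by apply/hc; right.
        split=> //; apply/(th0_updl (off := off + nC p) (mrg s e) ms hA hq ltac:(lia) ltac:(lia) h2 hj); exact: a2.
  + case=> e [c [/in_pairs [c1 [c2 [h1 h2 ->]]] [a b]]].
    exists (fun s => X s /\ fosat (mrg s e) c1.1), (fun s => X s /\ fosat (mrg s e) c2.1).
    split; first by move=> s; split=> [Xs|[] []//]; case: (a s Xs) => h; [left|right].
    have hDY : Def (fun s => X s /\ fosat (mrg s e) c1.1) p.
      by move=> s [Xs _] v hf; apply: (hD s Xs v); rewrite /= hf.
    have hDZ : Def (fun s => X s /\ fosat (mrg s e) c2.1) q.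
      by move=> s [Xs _] v hf; apply: (hD s Xs v); rewrite /= hf orbT.
    split.
    * apply/(IHp off _ hA hp hB ltac:(lia) hDY); exists e, c1; split=> //; split=> [s []//|A th hj ms hs].
      have := b A (FAnd c1.1 th) ltac:(apply/List.in_app_iff; left; exact: (List.in_map (fun j => (j.1, FAnd c1.1 j.2)) _ _ hj)) ms hs.
      case=> s [Xs [h0 hth]]; exists s; split=> //; split=> //.
      exact/(th0_updl (mrg s e) ms hA hp hB ltac:(lia) h1 hj).
    * apply/(IHq (off + nC p) _ hA hq ltac:(lia) ltac:(lia) hDZ); exists e, c2; split=> //; split=> [s []//|A th hj ms hs].
      have := b A (FAnd c2.1 th) ltac:(apply/List.in_app_iff; right; exact: (List.in_map (fun j => (j.1, FAnd c2.1 j.2)) _ _ hj)) ms hs.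
      case=> s [Xs [h0 hth]]; exists s; split=> //; split=> //.
      exact/(th0_updl (off := off + nC p) (mrg s e) ms hA hq ltac:(lia) ltac:(lia) h2 hj).
-
  move: hv => /= /andP [hp hq]; rewrite /= in hO.
  have hDp : Def X p by move=> s Xs v hf; apply: (hD s Xs v); rewrite /= hf.
  have hDq : Def X q by move=> s Xs v hf; apply: (hD s Xs v); rewrite /= hf orbT.
  rewrite /= (IHp off X hA hp hB ltac:(lia) hDp) (IHq (off + nC p) X hA hq ltac:(lia) ltac:(lia) hDq).
  split.
  + case=> [[e [c [h s1]]]|[e [c [h s1]]]]; exists e, c; split=> //; apply/List.in_app_iff; by [left|right].
  + by case=> e [c [/List.in_app_iff [] h s1]]; [left|right]; exists e, c.
-
  move: hv => /= /andP [hx hp]; rewrite /= in hO.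
  have xA : forall c A th, List.In c (tr offA off p) -> List.In (A, th) c.2 -> x \notin A.
    move=> c A th hc hj; have [_ J] := tr_FV hA hp hB hc; have [ha _] := J A th hj.
    by apply/negP => /ha; lia.
  split.
  + case=> F [hF tXF].
    have hDF : Def (fun t => exists s m, [/\ X s, F s m & t = upd s x m]) p.
      move=> t [s [m [Xs _ ->]]] v hf; rewrite /upd; case: eqP => // /eqP nv.
      by apply: (hD s Xs v); rewrite /= eq_sym nv hf.
    have [e [c' [hc [a b]]]] := (IHp off _ hA hp hB hO hDF).1 tXF.
    exists e, (exC x c'); split; first by apply: List.in_map.
    split.
    * move=> s Xs; have [m hm] := hF s Xs; exists m; rewrite -mrg_upd //; apply: a; by exists s, m.
    * move=> A th /List.in_map_iff [[A' th'] [[<- <-]] hj] ms hs /=.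
      have [t [[s [m [Xs Fsm ->]]] ht]] := b A' th' hj ms hs.
      exists s; split=> //; exists m.
      rewrite -updl_upd ?(xA _ _ _ hc hj) // -mrg_upd //; split=> //.
      apply/(th0_updl _ ms hA hp hB hO hc hj); apply: a; by exists s, m.
  + case=> e [c [/List.in_map_iff [c' [<- hc]] [a b]]].
    pose F := fun s m => fosat (mrg (upd s x m) e) c'.1.
    exists F; split.
    * move=> s Xs; have [m hm] := a s Xs; exists m; by rewrite /F mrg_upd.
    * have hDF : Def (fun t => exists s m, [/\ X s, F s m & t = upd s x m]) p.
        move=> t [s [m [Xs _ ->]]] v hf; rewrite /upd; case: eqP => // /eqP nv.
        by apply: (hD s Xs v); rewrite /= eq_sym nv hf.
      apply/(IHp off _ hA hp hB hO hDF).
      exists e, c'; split=> //; split.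
      - by move=> t [s [m [Xs Fsm ->]]].
      - move=> A th hj ms hs.
        have [s [Xs [m [h1 h2]]]] := b A (FEx x (FAnd c'.1 th))
           (List.in_map (fun j => (j.1, FEx x (FAnd c'.1 j.2))) _ _ hj) ms hs.
        rewrite -updl_upd ?(xA _ _ _ hc hj) // -mrg_upd // in h1 h2.
        exists (upd s x m); split=> //; exists s, m; split=> //.
        by apply/(th0_updl _ ms hA hp hB hO hc hj).
-
  move: hv => /= /andP [hx hp]; rewrite /= in hO.
  have xA : forall c A th, List.In c (tr offA off p) -> List.In (A, th) c.2 -> x \notin A.
    move=> c A th hc hj; have [_ J] := tr_FV hA hp hB hc; have [ha _] := J A th hj.
    by apply/negP => /ha; lia.
  have hDF : Def (fun t => exists s m, X s /\ t = upd s x m) p.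
    move=> t [s [m [Xs ->]]] v hf; rewrite /upd; case: eqP => // /eqP nv.
    by apply: (hD s Xs v); rewrite /= eq_sym nv hf.
  rewrite /= (IHp off _ hA hp hB hO hDF); split.
  + case=> e [c' [hc [a b]]]; exists e, (faC x c'); split; first by apply: List.in_map.
    split.
    * move=> s Xs m; rewrite -mrg_upd //; apply: a; by exists s, m.
    * move=> A th /List.in_map_iff [[A' th'] [[<- <-]] hj] ms hs /=.
      have [t [[s [m [Xs ->]]] ht]] := b A' th' hj ms hs.
      exists s; split=> //; exists m; by rewrite -updl_upd ?(xA _ _ _ hc hj) // -mrg_upd.
  + case=> e [c [/List.in_map_iff [c' [<- hc]] [a b]]]; exists e, c'; split=> //; split.
    * move=> t [s [m [Xs ->]]]; rewrite mrg_upd //; exact: a s Xs m.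
    * move=> A th hj ms hs.
      have [s [Xs [m h]]] := b A (FEx x th) (List.in_map (fun j => (j.1, FEx x j.2)) _ _ hj) ms hs.
      exists (upd s x m); split; first by exists s, m.
      by rewrite mrg_upd // updl_upd ?(xA _ _ _ hc hj).
Qed.
End Main.


Section Bound.
Variable S : signature.

Fixpoint tmaxv (t : term S) : nat :=
  match t with
  | TVar v => v.+1
  | TFun f a => \max_(i < far f) tmaxv (a i)
  end.

Fixpoint maxv (phi : form S) : nat :=
  match phi with
  | FEq t1 t2 | FNeq t1 t2 => maxn (tmaxv t1) (tmaxv t2)
  | FRel r a | FNRel r a => \max_(i < rar r) tmaxv (a i)
  | FConst vs | FAllA vs => \max_(v <- vs) v.+1
  | FAnd p q | FOr p q | FCor p q => maxn (maxv p) (maxv q)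
  | FEx x p | FFa x p => maxn x.+1 (maxv p)
  end.

Lemma tvlt_mono B B' (t : term S) : tvlt B t -> B <= B' -> tvlt B' t.
Proof.
elim: t => [v|f a IH] /=; first by move=> h1 h2; exact: leq_trans h1 h2.
by move=> /forallP h hB; apply/forallP => i; exact: IH.
Qed.

Lemma vlt_mono B B' (phi : form S) : vlt B phi -> B <= B' -> vlt B' phi.
Proof.
move=> + hB; elim: phi => [t1 t2|t1 t2|r a|r a|vs|vs|p IHp q IHq|p IHp q IHq|p IHp q IHq|x p IHp|x p IHp] /=;
 try (by case/andP=> h1 h2; rewrite (tvlt_mono h1 hB) (tvlt_mono h2 hB));
 try (by move=> /forallP h; apply/forallP => i; exact: tvlt_mono (h i) hB);
 try (by move=> /allP h; apply/allP => v /h hv; exact: leq_trans hv hB);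
 try (by case/andP=> h1 h2; rewrite IHp ?IHq);
 by case/andP=> h1 h2; rewrite IHp ?(leq_trans h1 hB).
Qed.

Lemma tvlt_max (t : term S) : tvlt (tmaxv t) t.
Proof.
elim: t => [v|f a IH] /=; first by [].
apply/forallP => i; apply: tvlt_mono (IH i) _; exact: (@leq_bigmax _ (fun j => tmaxv (a j)) i).
Qed.

Lemma vlt_max (phi : form S) : vlt (maxv phi) phi.
Proof.
elim: phi => [t1 t2|t1 t2|r a|r a|vs|vs|p IHp q IHq|p IHp q IHq|p IHp q IHq|x p IHp|x p IHp] /=;
 try (by rewrite (tvlt_mono (tvlt_max t1) (leq_maxl _ _)) (tvlt_mono (tvlt_max t2) (leq_maxr _ _)));
 try (by apply/forallP => i; apply: tvlt_mono (tvlt_max (a i)) _; exact: (@leq_bigmax _ (fun j => tmaxv (a j)) i));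
 try (by apply/allP => v hv; exact: (@leq_bigmax_seq _ vs predT (fun v => v.+1) v hv isT));
 try (by rewrite (vlt_mono IHp (leq_maxl _ _)) (vlt_mono IHq (leq_maxr _ _)));
 idtac. all: by rewrite leq_maxl (vlt_mono IHp (leq_maxr _ _)).
Qed.

End Bound.

Section Final.
Variable S : signature.

Definition foralls (A : seq nat) (th : form S) := foldr (@FFa S) th A.
Definition exs (A : seq nat) (th : form S) := foldr (@FEx S) th A.
Definition conjL (l : list (form S)) := foldr (@FAnd S) ftrue l.
Definition disjL (l : list (form S)) := foldr (@FOr S) ffalse l.
Definition clauseF (c : clause S) :=
  FAnd c.1 (conjL (List.map (fun j => foralls j.1 j.2) c.2)).

Lemma isFO_exs A f : isFO (exs A f) = isFO f.
Proof. by elim: A. Qed.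
Lemma isFO_foralls A f : isFO (foralls A f) = isFO f.
Proof. by elim: A. Qed.
Lemma isFO_disjL l : (forall f, List.In f l -> isFO f) -> isFO (disjL l).
Proof. elim: l => [|f l IH] //= h; rewrite h ?IH //; [move=> g hg; apply: h; by right | by left]. Qed.
Lemma isFO_conjL l : (forall f, List.In f l -> isFO f) -> isFO (conjL l).
Proof. elim: l => [|f l IH] //= h; rewrite h ?IH //; [move=> g hg; apply: h; by right | by left]. Qed.
Lemma isFO_ceqs vs cs : isFO (@ceqs S vs cs).
Proof. elim: vs cs => [|v vs IH] [|c cs] //=; exact: IH. Qed.

Lemma ffree_exs v A f : ffree v (exs A f) = (v \notin A) && ffree v f.
Proof. by elim: A => [|a A IH] //=; rewrite IH inE negb_or eq_sym andbA. Qed.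
Lemma ffree_foralls v A f : ffree v (foralls A f) = (v \notin A) && ffree v f.
Proof. by elim: A => [|a A IH] //=; rewrite IH inE negb_or eq_sym andbA. Qed.
Lemma ffree_disjL v l : ffree v (disjL l) -> exists f, List.In f l /\ ffree v f.
Proof.
elim: l => [|f l IH] /=; first by case/andP => /negbTE h; rewrite orbb h.
by case/orP=> [h|/IH [g [hg h]]]; [exists f; split=> //; left | exists g; split=> //; right].
Qed.
Lemma ffree_conjL v l : ffree v (conjL l) -> exists f, List.In f l /\ ffree v f.
Proof.
elim: l => [|f l IH] /=; first by case/andP => /negbTE h; rewrite orbb h.
by case/orP=> [h|/IH [g [hg h]]]; [exists f; split=> //; left | exists g; split=> //; right].
Qed.

Lemma tr_FO offA off (phi : form S) c : List.In c (tr offA off phi) ->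
  isFO c.1 /\ forall A th, List.In (A, th) c.2 -> isFO th.
Proof.
elim: phi off c => [t1 t2|t1 t2|r a|r a|vs|vs|p IHp q IHq|p IHp q IHq|p IHp q IHq|x p IHp|x p IHp] off c /=;
 try (by case=> // <-).
- by case=> // <-; split; [exact: isFO_ceqs | move=> ? ? []].
- by case=> // <-; split=> // A th [[_ <-]|[]]; exact: isFO_ceqs.
- case/in_pairs => [c1 [c2 [h1 h2 ->]]]; have [a1 b1] := IHp _ _ h1; have [a2 b2] := IHq _ _ h2.
  by split; [rewrite /= a1 a2 | move=> A th /List.in_app_iff [] hj; [exact: b1 hj | exact: b2 hj]].
- case/in_pairs => [c1 [c2 [h1 h2 ->]]]; have [a1 b1] := IHp _ _ h1; have [a2 b2] := IHq _ _ h2.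
  split; first by rewrite /= a1 a2.
  move=> A th /List.in_app_iff [] /List.in_map_iff [[A' th'] [[_ <-]] hj] /=.
    by rewrite a1 (b1 _ _ hj).
  by rewrite a2 (b2 _ _ hj).
- by case/List.in_app_iff => h; [exact: IHp h | exact: IHq h].
- case/List.in_map_iff => [c' [<- h]]; have [a1 b1] := IHp _ _ h; split=> //.
  by move=> A th /List.in_map_iff [[A' th'] [[_ <-]] hj] /=; rewrite a1 (b1 _ _ hj).
- case/List.in_map_iff => [c' [<- h]]; have [a1 b1] := IHp _ _ h; split=> //.
  by move=> A th /List.in_map_iff [[A' th'] [[_ <-]] hj] /=; rewrite (b1 _ _ hj).
Qed.

Section FSem.
Variable M : structure S.
Implicit Types (s : assign M).

Lemma foralls_sem s A th :
  fosat s (foralls A th) <-> forall ms, size ms = size A -> fosat (updl s A ms) th.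
Proof.
elim: A s => [|a A IH] s /=; first by split=> [h [|]|h] //; exact: (h [::]).
split=> [h [|m ms] //= [hs]|h m]; first exact: (IH (upd s a m)).1 (h m) ms hs.
by apply/IH => ms hs; apply: (h (m :: ms)); rewrite /= hs.
Qed.

Lemma exs_sem s A th :
  fosat s (exs A th) <-> exists ms, size ms = size A /\ fosat (updl s A ms) th.
Proof.
elim: A s => [|a A IH] s /=; first by split=> [h|[ms [_ h]]] //; exists [::].
split=> [[m /IH [ms [hs h]]]|[[|m ms] [hs h]]]; first by exists (m :: ms); rewrite /= hs.
  by [].
by exists m; apply/IH; exists ms; case: hs.
Qed.

Lemma disjL_sem s l : fosat s (disjL l) <-> exists f, List.In f l /\ fosat s f.
Proof.
elim: l => [|f l IH] /=; first by split=> [/ffalse_sem|[? [[]]]].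
rewrite IH; split=> [[h|[g [hg h]]]|[g [[<-|hg] h]]]; [exists f; split=> //; left|exists g; split=> //; right|left|right; exists g] => //.
Qed.

Lemma conjL_sem s l : fosat s (conjL l) <-> forall f, List.In f l -> fosat s f.
Proof.
elim: l => [|f l IH] /=; first by split=> // _; exact: ftrue_sem.
rewrite IH; split=> [[h1 h2] g [<-|hg]|h]; [by []| exact: h2 | split; [apply: h; left | move=> g hg; apply: h; right]] => //.
Qed.

Definition Q s (c : clause S) := fosat s c.1 /\
  forall A th, List.In (A, th) c.2 -> forall ms, size ms = size A -> fosat (updl s A ms) th.

Lemma clauseF_sem s c : fosat s (clauseF c) <-> Q s c.
Proof.
rewrite /clauseF /Q /= conjL_sem; split=> -[h1 h2]; split=> //.
- by move=> A th hj; apply/foralls_sem; apply: h2; exact: (List.in_map (fun j => foralls j.1 j.2) _ _ hj).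
- by move=> f /List.in_map_iff [[A th] [<- hj]]; apply/foralls_sem; exact: h2.
Qed.

Lemma Q_agree B offA (phi : form S) c s1 s2 : B <= offA -> vlt B phi ->
  List.In c (tr offA B phi) -> (forall v, v < B + nC phi -> s1 v = s2 v) -> Q s1 c -> Q s2 c.
Proof.
move=> hA hv hc he [h1 h2]; have [F J] := tr_FV hA hv (leqnn B) hc; split.
- apply/(fosat_agree (s := s1)) => // v hf; apply: he; have [a b] := F v hf.
  by case: (ltnP v B) => h; [lia | have := b h; lia].
- move=> A th hj ms hs; apply/(fosat_agree (s := updl s1 A ms)); last exact: h2.
  move=> v hf; apply: updl_agree; case hvA: (v \in A); first by left.
  right; apply: he; have [_ J2] := J A th hj; have [a b] := J2 v hf.
  case: (ltnP v B) => h; first lia.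
  by case: (b h) => [hr|]; [lia | rewrite hvA].
Qed.

Lemma updl_in s A (e : nat -> dom M) v : uniq A -> v \in A -> updl s A (map e A) v = Some (e v).
Proof.
elim: A s => [|a A IH] s //= /andP [na uA]; rewrite inE => /orP [/eqP ->|hv].
  by rewrite updl_out // upd_same.
exact: IH.
Qed.

End FSem.

Lemma sentence_FO_all (phi : form S) : sentence phi ->
  exists psi : form S, [/\ isFO psi, sentence psi &
    forall M : structure S, team_true M phi <-> fo_true M psi].
Proof.
move=> hs.
pose B := maxv phi; pose offA := B + nC phi; pose P := iota B (nC phi).
have hA : B <= offA by rewrite leq_addr.
have hv : vlt B phi := vlt_max phi.
have hO : B + nC phi <= offA by [].
exists (exs P (disjL (List.map clauseF (tr offA B phi)))); split.
- rewrite isFO_exs; apply: isFO_disjL => f /List.in_map_iff [c [<- hc]].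
  have [a b] := tr_FO hc; rewrite /= a; apply: isFO_conjL => g /List.in_map_iff [[A th] [<- hj]].
  by rewrite isFO_foralls (b _ _ hj).
- move=> v; apply/negP; rewrite ffree_exs => /andP [nP /ffree_disjL [f [/List.in_map_iff [c [<- hc]] hf]]].
  have [F J] := tr_FV hA hv (leqnn B) hc.
  move: hf => /= /orP [hf | /ffree_conjL [g [/List.in_map_iff [[A th] [<- hj]] hg]]].
  + have [a b] := F v hf; case: (ltnP v B) => h.
      by have := hs v; rewrite (a h).
    by move: nP; rewrite mem_iota (b h).
  + move: hg; rewrite /= ffree_foralls => /andP [nA hth].
    have [_ J2] := J A th hj; have [a b] := J2 v hth; case: (ltnP v B) => h.
      by have := hs v; rewrite (a h).
    by case: (b h) => [hr|hr]; [move: nP; rewrite mem_iota hr | move: nA; rewrite hr].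
- move=> M.
  have hD : Def (fun s : assign M => s = empty_assign M) phi.
    by move=> s _ v hf; have := hs v; rewrite hf.
  rewrite /team_true /fo_true (tr_sem (off := B) hA hv (leqnn B) hO hD) exs_sem.
  have PB : forall v, v \in P -> B <= v by move=> v; rewrite mem_iota => /andP [].
  split.
  + case=> e [c [hc [h1 h2]]].
    exists (map e P); split; first by rewrite size_map.
    apply/disjL_sem; exists (clauseF c); split; first exact: List.in_map.
    apply/clauseF_sem; apply: (Q_agree (s1 := mrg B (empty_assign M) e) hA hv hc).
      move=> v hvB; case: (ltnP v B) => h.
        rewrite mrg_lt // updl_out //; apply/negP => /PB; lia.
      rewrite mrg_ge // updl_in ?iota_uniq //; rewrite mem_iota; lia.
    split; first exact: h1.
    move=> A th hj ms hs'; have [s [-> h]] := h2 A th hj ms hs'; exact: h.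
  + case=> ms [hs' /disjL_sem [f [/List.in_map_iff [c [<- hc]] /clauseF_sem hq]]].
    exists (fun v => odflt (dom0 M) (updl (empty_assign M) P ms v)), c; split=> //.
    have hq' := Q_agree (s2 := mrg B (empty_assign M) (fun v => odflt (dom0 M) (updl (empty_assign M) P ms v))) hA hv hc _ hq.
    have [h1 h2] : Q (mrg B (empty_assign M) (fun v => odflt (dom0 M) (updl (empty_assign M) P ms v))) c.
      apply: hq' => v hvB; case: (ltnP v B) => h.
        rewrite mrg_lt // updl_out //; apply/negP => /PB; lia.
      rewrite mrg_ge //.
      have : isSome (updl (empty_assign M) P ms v).
        apply: (map_some (updl_map _ (iota_uniq _ _) _)); first by rewrite hs' size_iota.
        rewrite mem_iota; lia.
      by case: (updl _ _ _ v).
    split; first by move=> s ->.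
    by move=> A th hj ms' hs''; exists (empty_assign M); split=> //; exact: h2.
Qed.

End Final.


Section Repl.
Variable S : signature.

Fixpoint repl (phi : form S) : form S :=
  match phi with
  | FAllA vs => FFa (sumn vs).+1 (@FAllA S (rcons vs (sumn vs).+1))
  | FAnd p q => FAnd (repl p) (repl q)
  | FOr p q => FOr (repl p) (repl q)
  | FCor p q => FCor (repl p) (repl q)
  | FEx x p => FEx x (repl p)
  | FFa x p => FFa x (repl p)
  | lit => lit
  end.

Lemma repl_in k phi : inFOconstAllCor k phi -> inFOconstAllCor k.+1 (repl phi).
Proof.
elim: phi => //= [vs|p IHp q IHq|p IHp q IHq|p IHp q IHq];
  try (by case/andP=> h1 h2; rewrite IHp ?IHq).
by rewrite size_rcons eqSS.
Qed.

Lemma sumn_ge vs v : v \in vs -> v <= sumn vs.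
Proof.
elim: vs => [|a vs IH] //=; rewrite inE => /orP [/eqP ->|/IH h]; first exact: leq_addr.
exact: leq_trans h (leq_addl _ _).
Qed.

Lemma repl_sem (M : structure S) (X : team M) phi : tsat X phi <-> tsat X (repl phi).
Proof.
elim: phi X => [t1 t2|t1 t2|r a|r a|vs|vs|p IHp q IHq|p IHp q IHq|p IHp q IHq|x p IHp|x p IHp] X //=.
- set w := (sumn vs).+1.
  have nw : forall v, v \in vs -> v != w.
    by move=> v /sumn_ge h; apply/eqP => e; move: h; rewrite e /w ltnn.
  have mapw : forall (s : assign M) (m : dom M), map (upd s w m) vs = map s vs.
    by move=> s m; apply/eq_in_map => v /nw; exact: upd_other.
  split.
  + move=> H ms; case/lastP: ms => [|ms m]; first by rewrite size_rcons.
    rewrite !size_rcons => -[hs]; have [s0 [X0 h]] := H ms hs.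
    exists (upd s0 w m); split; first by exists s0, m.
    by rewrite !map_rcons mapw h upd_same.
  + move=> H ms hs; have [t [[s0 [m [X0 ->]]]]] := H (rcons ms (dom0 M)) ltac:(by rewrite !size_rcons hs).
    rewrite !map_rcons mapw => /rcons_inj [h _]; by exists s0.
- by rewrite IHp IHq.
- split; case=> Y [Z [h [a b]]]; exists Y, Z; split=> //; split; by [apply/IHp | apply/IHq].
- by rewrite IHp IHq.
- by split; case=> F [h a]; exists F; split=> //; apply/IHp.
Qed.

End Repl.

Section Small.
Variable S : signature.
Variable M : structure S.
Variable k : nat.

Fixpoint na (phi : form S) : nat :=
  match phi with
  | FAllA _ => 1
  | FAnd p q | FOr p q | FCor p q => na p + na q
  | FEx _ p | FFa _ p => na p
  | _ => 0
  end.

Definition Small (X : team M) (phi : form S) :=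
  exists (c : nat) (W : nat -> seq (dom M) -> assign M), [/\ c <= na phi,
    (forall i ms, i < c -> size ms = k -> X (W i ms)) &
    forall Z : team M, (forall t, Z t -> X t) ->
      (forall i ms, i < c -> size ms = k -> Z (W i ms)) -> tsat Z phi].

Definition comb (c1 : nat) (W1 W2 : nat -> seq (dom M) -> assign M) :=
  fun i => if i < c1 then W1 i else W2 (i - c1).

Lemma comb_spec (P : assign M -> Prop) c1 c2 W1 W2 :
  (forall i ms, i < c1 + c2 -> size ms = k -> P (comb c1 W1 W2 i ms)) <->
  (forall i ms, i < c1 -> size ms = k -> P (W1 i ms)) /\
  (forall i ms, i < c2 -> size ms = k -> P (W2 i ms)).
Proof.
rewrite /comb; split.
- move=> H; split=> i ms hi hs.
    by have := H i ms ltac:(lia) hs; rewrite hi.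
  have := H (c1 + i) ms ltac:(lia) hs; rewrite addKn.
  by have -> : (c1 + i < c1) = false by lia.
- case=> H1 H2 i ms hi hs; case: ltnP => h; first exact: H1.
  apply: H2 => //; lia.
Qed.

Definition inh : inhabited (assign M) := inhabits (empty_assign M).

Lemma small_inv (phi : form S) (X : team M) :
  inFOconstAllCor k phi -> tsat X phi -> Small X phi.
Proof.
elim: phi X => [t1 t2|t1 t2|r a|r a|vs|vs|p IHp q IHq|p IHp q IHq|p IHp q IHq|x p IHp|x p IHp] X /= hin;
 try (by move=> H; exists 0, (fun _ _ => empty_assign M); split;
         [ by [] | by move=> i ms; rewrite ltn0 | move=> Z hZ _ s Zs; apply: (H s); exact: hZ ]).
- move=> H; exists 0, (fun _ _ => empty_assign M); split; [by [] | by move=> i ms; rewrite ltn0 | ].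
  by move=> Z hZ _ s s' Zs Zs'; apply: H; exact: hZ.
-
  move=> H; move/eqP: hin => hk.
  pose W := fun (_ : nat) (ms : seq (dom M)) => ClassicalEpsilon.epsilon inh (fun s => X s /\ map s vs = map Some ms).
  have spec : forall i ms, size ms = k -> X (W i ms) /\ map (W i ms) vs = map Some ms.
    move=> i ms hs; apply: (ClassicalEpsilon.epsilon_spec inh (fun s => X s /\ map s vs = map Some ms)).
    apply: H; by rewrite hs.
  exists 1, W; split=> //.
    by move=> i ms _ hs; case: (spec i ms hs).
  move=> Z hZ hW ms hs; exists (W 0 ms); split; first by apply: hW; rewrite // hs.
  by case: (spec 0 ms ltac:(by rewrite hs)).
-
  case/andP: hin => h1 h2 [t1 t2].
  have [c1 [W1 [hc1 hX1 hZ1]]] := IHp X h1 t1; have [c2 [W2 [hc2 hX2 hZ2]]] := IHq X h2 t2.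
  exists (c1 + c2), (comb c1 W1 W2); split; first by rewrite /=; lia.
    by apply/comb_spec.
  move=> Z hZ /comb_spec [w1 w2]; split; [exact: hZ1 | exact: hZ2].
-
  case/andP: hin => h1 h2 [Y [Y' [hc [t1 t2]]]].
  have [c1 [W1 [hc1 hX1 hZ1]]] := IHp Y h1 t1; have [c2 [W2 [hc2 hX2 hZ2]]] := IHq Y' h2 t2.
  exists (c1 + c2), (comb c1 W1 W2); split; first by rewrite /=; lia.
    apply/comb_spec; split=> i ms hi hs; apply: ((hc _).2); [left; exact: hX1 | right; exact: hX2].
  move=> Z hZ /comb_spec [w1 w2].
  exists (fun t => Z t /\ Y t), (fun t => Z t /\ Y' t); split.
    move=> s; split=> [Zs|[[Zs _]|[Zs _]] //]; by case: ((hc s).1 (hZ s Zs)) => h; [left|right].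
  split.
  + apply: hZ1; first by move=> t [].
    by move=> i ms hi hs; split; [exact: w1 | exact: hX1].
  + apply: hZ2; first by move=> t [].
    by move=> i ms hi hs; split; [exact: w2 | exact: hX2].
-
  case/andP: hin => h1 h2 [t1|t2].
  + have [c1 [W1 [hc1 hX1 hZ1]]] := IHp X h1 t1.
    exists c1, W1; split=> //; first by rewrite /=; lia.
    by move=> Z hZ hW; left; exact: hZ1.
  + have [c2 [W2 [hc2 hX2 hZ2]]] := IHq X h2 t2.
    exists c2, W2; split=> //; first by rewrite /=; lia.
    by move=> Z hZ hW; right; exact: hZ2.
-
  case=> F [hF tF].
  have [c [W' [hc hX' hZ']]] := IHp _ hin tF.
  pose orig := fun t : assign M => ClassicalEpsilon.epsilon inh
     (fun s => X s /\ exists m, F s m /\ t = upd s x m).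
  have spec : forall i ms, i < c -> size ms = k ->
      X (orig (W' i ms)) /\ exists m, F (orig (W' i ms)) m /\ W' i ms = upd (orig (W' i ms)) x m.
    move=> i ms hi hs; apply: (ClassicalEpsilon.epsilon_spec inh (fun s => X s /\ exists m, F s m /\ W' i ms = upd s x m)).
    have [s [m [Xs Fsm e]]] := hX' i ms hi hs; exists s; split=> //; by exists m.
  exists c, (fun i ms => orig (W' i ms)); split=> //.
    by move=> i ms hi hs; case: (spec i ms hi hs).
  move=> Z hZ hW; exists F; split; first by move=> s /hZ /hF.
  apply: hZ'; first by move=> t [s [m [Zs Fsm ->]]]; exists s, m; split=> //; exact: hZ.
  move=> i ms hi hs; have [_ [m [Fm e]]] := spec i ms hi hs.
  by exists (orig (W' i ms)), m; split=> //; exact: hW.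
-
  move=> tF.
  have [c [W' [hc hX' hZ']]] := IHp _ hin tF.
  pose orig := fun t : assign M => ClassicalEpsilon.epsilon inh
     (fun s => X s /\ exists m, t = upd s x m).
  have spec : forall i ms, i < c -> size ms = k ->
      X (orig (W' i ms)) /\ exists m, W' i ms = upd (orig (W' i ms)) x m.
    move=> i ms hi hs; apply: (ClassicalEpsilon.epsilon_spec inh (fun s => X s /\ exists m, W' i ms = upd s x m)).
    have [s [m [Xs e]]] := hX' i ms hi hs; exists s; split=> //; by exists m.
  exists c, (fun i ms => orig (W' i ms)); split=> //.
    by move=> i ms hi hs; case: (spec i ms hi hs).
  move=> Z hZ hW.
  apply: hZ'; first by move=> t [s [m [Zs ->]]]; exists s, m; split=> //; exact: hZ.
  move=> i ms hi hs; have [_ [m e]] := spec i ms hi hs.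
  by exists (orig (W' i ms)), m; split=> //; exact: hW.
Qed.

End Small.


Definition S0 : signature :=
  @Signature void (fun _ => 0) void (fun _ => 0).

Lemma not_incl k : ~ included (FOconstAllCor k.+1) (FOconstAllCor k).
Proof.
move=> H.
pose phi : form S0 := FAllA S0 (iota 0 k.+1).
have [psi [hpsi heq]] := H S0 phi ltac:(by rewrite /FOconstAllCor /= size_iota).
pose n := (na psi).+1.
pose N := maxn k.+1 (maxv psi).
pose M : structure S0 := @mkStructure S0 'I_n ord0
  (fun r _ => match r with end) (fun f _ => match f with end).
pose X : team M := fun s => forall v, isSome (s v) = (v < N).
have hX : team_on (iota 0 N) X by move=> s Xs v; rewrite mem_iota /= add0n Xs.
have hfree : forall v, ffree v phi || ffree v psi -> v \in iota 0 N.
  move=> v /orP [h|h]; rewrite mem_iota /= add0n.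
    have : v \in iota 0 k.+1 := h; rewrite mem_iota /= add0n => h1; apply: leq_trans h1 (leq_maxl _ _).
  exact: leq_trans (vlt_free (vlt_max psi) h) (leq_maxr _ _).
have tX : tsat X phi.
  move=> ms hs; rewrite size_iota in hs.
  exists (fun v => if v < N then Some (nth ord0 ms v) else None); split.
    by move=> v; case: ifP.
  rewrite -hs; transitivity (map Some (map (nth ord0 ms) (iota 0 (size ms)))).
    rewrite -map_comp; apply/eq_in_map => v; rewrite mem_iota /= add0n => hv.
    suff -> : v < N by [].
    apply: leq_trans hv _; rewrite hs; exact: leq_maxl.
  by rewrite map_nth_iota0 // take_size.
have tpsi := (heq M (iota 0 N) X hX hfree).1 tX.
have [c [W [hc hW hZ]]] := small_inv hpsi tpsi.
pose Y : team M := fun t => exists i ms, [/\ i < c, size ms = k & t = W i ms].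
have tY : tsat Y psi.
  apply: hZ; first by move=> t [i [ms [hi hs ->]]]; exact: hW.
  by move=> i ms hi hs; exists i, ms.
have hY : team_on (iota 0 N) Y.
  move=> s [i [ms [hi hs ->]]]; apply: hX; exact: hW.
have tYphi : tsat Y phi := (heq M (iota 0 N) Y hY hfree).2 tY.
pose g := fun p : 'I_c * k.-tuple 'I_n =>
  [tuple odflt ord0 (W p.1 p.2 j) | j < k.+1].
have sub : #|{: (k.+1).-tuple 'I_n}| <= #|image g predT|.
  apply: subset_leq_card; apply/subsetP => u _.
  have [t [[i [ms [hi hms ->]]] hmap]] := tYphi u ltac:(by rewrite size_tuple size_iota).
  apply/imageP; exists (Ordinal hi, Tuple (introT eqP hms)) => //.
  apply: eq_from_tnth => j; rewrite tnth_mktuple /=.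
  have := congr1 (fun l => nth None l j) hmap.
  rewrite (nth_map 0) ?size_iota // (nth_map ord0) ?size_tuple // nth_iota // add0n.
  by rewrite (tnth_nth ord0) => ->.
have := leq_trans sub (leq_image_card g predT).
rewrite card_tuple card_prod card_ord card_tuple card_ord expnS.
rewrite card_ord leq_pmul2r ?expn_gt0 //; rewrite /n; lia.
Qed.

Theorem mainTheorem4 : forall k : nat,
  strictly_included (FOconstAllCor k) (FOconstAllCor k.+1) /\
  sentences_FO (FOconstAllCor k) /\ sentences_FO (FOconstAllCor k.+1).
Proof.
move=> k; split; [split|split].
- move=> S phi h; exists (repl phi); split; first exact: repl_in.
  by move=> M V X _ _; exact: repl_sem.
- exact: not_incl.
- by move=> S phi _ hs; exact: sentence_FO_all.
- by move=> S phi _ hs; exact: sentence_FO_all.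
Qed.
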